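(* Let $f$ be a fractal, let $g$ be any multivalued function between represented spaces and let $n \geq 1$. If $f \leq_W g \star \mathrm{C}_{\{1,\ldots,n\}}$, then $f \leq_W g$.
   Context: A represented space is $\mathbf{X} = (X,\delta_X)$ with $\delta_X :\subseteq \mathbb{N}^\mathbb{N}\to X$ a partial surjection. A realizer of $f :\subseteq \mathbf{X}\rightrightarrows\mathbf{Y}$ is a partial $F$ on Baire space with $\delta_Y F(p)\in f(\delta_X(p))$ for all $p\in\operatorname{dom}(f\delta_X)$. $f\leq_W g$ iff there are computable partial $K,H$ on Baire space such that $p\mapsto K\langle p,G(H(p))\rangle$ realizes $f$ for every realizer $G$ of $g$; $\equiv_W$ is the induced equivalence. The composition product is $f \star g := \sup_{\leq_W}\{f'\circ g' \mid f'\leq_W f,\ g'\leq_W g\}$ (this supremum always exists). $\mathrm{C}_{\{1,\ldots,n\}}$ is closed choice on the discrete space $\{1,\ldots,n\}$ (input: a non-empty subset given by an enumeration of its complement; output: an element of it). For $A\subseteq\mathbb{N}^\mathbb{N}$, $\mathbf{X}_A := (\delta_X[A], \delta_X|_A)$ and for $f:\subseteq\mathbf{X}\rightrightarrows\mathbf{Y}$, $f_A :\subseteq\mathbf{X}_A\rightrightarrows\mathbf{Y}$ is the induced map. $0$ denotes the Weihrauch degree of the nowhere defined function. $f$ is a fractal iff there is some $g:\mathbf{X}\rightrightarrows\mathbf{Y}$ with $\mathbf{X}\neq\emptyset$ such that for every clopen $A\subseteq\mathbb{N}^\mathbb{N}$ either $g_A\equiv_W f$ or $g_A\equiv_W 0$.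 *)

(* Defs.v *)
From mathcomp Require Import all_boot.
From Stdlib Require Import ProofIrrelevance.

Set Implicit Arguments.
Unset Strict Implicit.
Unset Printing Implicit Defensive.

Definition Baire := nat -> nat.

Definition pairB (p q : Baire) : Baire :=
  fun n => if odd n then q n./2 else p n./2.

Definition prefix (p : Baire) (k : nat) : seq nat := map p (iota 0 k).

Definition cpair (a b : nat) : nat := ((a + b) * (a + b).+1) %/ 2 + b.
Fixpoint code_seq (s : seq nat) : nat :=
  match s with [::] => 0 | x :: s' => (cpair x (code_seq s')).+1 end.

Inductive recf : Type :=
| RZero : recf
| RSucc : recf
| RProj : nat -> recf
| RComp : recf -> list recf -> recf
| RPrec : recf -> recf -> recf
| RMin  : recf -> recf.

Inductive evalR : recf -> seq nat -> nat -> Prop :=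
| eZero l : evalR RZero l 0
| eSucc l : evalR RSucc l (nth 0 l 0).+1
| eProj i l : evalR (RProj i) l (nth 0 l i)
| eComp f gs l ys y : evalL gs l ys -> evalR f ys y -> evalR (RComp f gs) l y
| ePrec0 f g l y : evalR f l y -> evalR (RPrec f g) (0 :: l) y
| ePrecS f g x l r y : evalR (RPrec f g) (x :: l) r ->
    evalR g (x :: r :: l) y -> evalR (RPrec f g) (x.+1 :: l) y
| eMin f l y : evalR f (y :: l) 0 ->
    (forall z, z < y -> exists w, w <> 0 /\ evalR f (z :: l) w) ->
    evalR (RMin f) l y
with evalL : list recf -> seq nat -> seq nat -> Prop :=
| eNil l : evalL nil l [::]
| eCons g gs l y ys : evalR g l y -> evalL gs l ys -> evalL (cons g gs) l (y :: ys).

Definition computable_nat (alpha : nat -> nat) : Prop :=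
  exists e : recf, forall x, evalR e [:: x] (alpha x).

(** [eta alpha p q]: the partial function with associate alpha maps p to q:
    q(n) = alpha(<n, p[k]>) - 1 for the least k with alpha(<n, p[k]>) > 0. *)
Definition eta (alpha : nat -> nat) (p q : Baire) : Prop :=
  forall n, exists k,
    0 < alpha (cpair n (code_seq (prefix p k))) /\
    (forall j, j < k -> alpha (cpair n (code_seq (prefix p j))) = 0) /\
    q n = (alpha (cpair n (code_seq (prefix p k)))).-1.

Record RepSpace : Type := {
  carrier :> Type;
  delta : Baire -> carrier -> Prop;
  delta_fun : forall p x y, delta p x -> delta p y -> x = y;
  delta_surj : forall x, exists p, delta p x
}.

(** partial multivalued f :⊆ X ⇉ Y, given as a relation; dom f = {x | ∃y, f x y} *)
Definition mvf (X Y : RepSpace) := X -> Y -> Prop.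

Definition realizer (X Y : RepSpace) (f : mvf X Y) (G : Baire -> option Baire) :=
  forall p x, delta p x -> (exists y, f x y) ->
    exists q, G p = Some q /\ exists y, delta q y /\ f x y.

(** Weihrauch reducibility f <=W g, with K := eta alpha, H := eta beta *)
Definition W_le (X Y U V : RepSpace) (f : mvf X Y) (g : mvf U V) : Prop :=
  exists alpha beta : nat -> nat,
    computable_nat alpha /\ computable_nat beta /\
    forall G, realizer g G ->
      forall p x, delta p x -> (exists y, f x y) ->
        exists h q r, eta beta p h /\ G h = Some q /\ eta alpha (pairB p q) r /\
          exists y, delta r y /\ f x y.

Definition W_eq (X Y U V : RepSpace) (f : mvf X Y) (g : mvf U V) : Prop :=
  W_le f g /\ W_le g f.

Definition mv_comp (X Y Z : RepSpace) (f : mvf Y Z) (g : mvf X Y) : mvf X Z :=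
  fun x z => (forall y, g x y -> exists z', f y z') /\ exists y, g x y /\ f y z.

Definition is_comp_product (X Y U V C D : RepSpace)
    (f : mvf X Y) (g : mvf U V) (h : mvf C D) : Prop :=
  (forall (X' Y' Z' : RepSpace) (f' : mvf Y' Z') (g' : mvf X' Y'),
      W_le f' f -> W_le g' g -> W_le (mv_comp f' g') h) /\
  (forall (C' D' : RepSpace) (k : mvf C' D'),
      (forall (X' Y' Z' : RepSpace) (f' : mvf Y' Z') (g' : mvf X' Y'),
          W_le f' f -> W_le g' g -> W_le (mv_comp f' g') k) ->
      W_le h k).

(** The discrete space {1,...,n}: the element i : 'I_n stands for the number
    i+1; a name p of k ∈ {1..n} is any p with p(0) = k. *)
Lemma finsp_fun n (p : Baire) (x y : 'I_n) : p 0 = x.+1 -> p 0 = y.+1 -> x = y.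
Proof. by move=> -> [] /val_inj. Qed.

Lemma finsp_surj n (x : 'I_n) : exists p : Baire, p 0 = x.+1.
Proof. by exists (fun _ => x.+1). Qed.

Definition FinSpace (n : nat) : RepSpace :=
  {| carrier := 'I_n; delta := fun p (x : 'I_n) => p 0 = x.+1;
     delta_fun := @finsp_fun n; delta_surj := @finsp_surj n |}.

(** subsets A of {1,...,n}, named by an enumeration p of the complement
    {1..n} \ A (the values of p outside {1..n}, e.g. 0, are ignored). *)
Definition subset_name n (p : Baire) (A : {set 'I_n}) : Prop :=
  forall i : 'I_n, i \in A <-> ~ (exists j, p j = i.+1).

Lemma subsp_fun n p (A B : {set 'I_n}) :
  subset_name p A -> subset_name p B -> A = B.
Proof.
move=> hA hB; apply/setP=> i.
case: (boolP (i \in A)) => iA; case: (boolP (i \in B)) => iB //.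
- by move/hA: iA => /hB; rewrite (negbTE iB).
- by move/hB: iB => /hA; rewrite (negbTE iA).
Qed.

Lemma subsp_surj n (A : {set 'I_n}) : exists p, subset_name p A.
Proof.
exists (fun j => if [exists i : 'I_n, (i.+1 == j) && (i \notin A)] then j else 0).
move=> i; split.
- move=> iA [j]; case: ifP => [/existsP [i' /andP [/eqP Hi' nA]] Hj|_ Hj //].
  move: Hj; rewrite -Hi' => -[] /val_inj Hi; subst i'.
  by rewrite iA in nA.
- move=> H; apply/negPn/negP=> nA; apply: H; exists i.+1.
  case: ifP => // /negbT /existsPn /(_ i).
  by rewrite eqxx nA.
Qed.

Definition SubsetSpace (n : nat) : RepSpace :=
  {| carrier := {set 'I_n}; delta := @subset_name n;
     delta_fun := @subsp_fun n; delta_surj := @subsp_surj n |}.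

(** C_{1..n} : ⊆ A(1..n) ⇉ {1..n}, A ↦ A, defined on non-empty A *)
Definition C_fin (n : nat) : mvf (SubsetSpace n) (FinSpace n) :=
  fun (A : {set 'I_n}) (i : 'I_n) => i \in A.
Arguments C_fin n _ _ : clear implicits.

Definition openB (A : Baire -> Prop) : Prop :=
  forall p, A p -> exists n, forall q, (forall i, i < n -> q i = p i) -> A q.
Definition clopenB (A : Baire -> Prop) : Prop :=
  openB A /\ openB (fun p => ~ A p).

Section Restrict.
Variables (X : RepSpace) (A : Baire -> Prop).

Definition restr_carrier := {x : X | exists p, A p /\ delta p x}.
Definition restr_delta (p : Baire) (x : restr_carrier) : Prop :=
  A p /\ delta p (proj1_sig x).

Lemma restr_fun p x y : restr_delta p x -> restr_delta p y -> x = y.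
Proof.
case: x y => [x hx] [y hy] /= [_ dx] [_ dy].
apply: eq_sig_hprop => [z a b|/=]; first exact: proof_irrelevance.
exact: delta_fun dx dy.
Qed.

Lemma restr_surj x : exists p, restr_delta p x.
Proof. by case: x => [x [p [Ap dp]]]; exists p. Qed.

Definition RestrSpace : RepSpace :=
  {| carrier := restr_carrier; delta := restr_delta;
     delta_fun := restr_fun; delta_surj := restr_surj |}.
End Restrict.

Definition restr_mvf (X Y : RepSpace) (g : mvf X Y) (A : Baire -> Prop)
  : mvf (RestrSpace X A) Y := fun x y => g (proj1_sig x) y.
Arguments restr_mvf {X Y} g A _ _.

Lemma unit_fun (p : Baire) (x y : unit) : True -> True -> x = y.
Proof. by case: x; case: y. Qed.
Lemma unit_surj (x : unit) : exists p : Baire, True.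
Proof. by exists (fun _ => 0). Qed.
Definition UnitSpace : RepSpace :=
  {| carrier := unit; delta := fun _ _ => True;
     delta_fun := unit_fun; delta_surj := unit_surj |}.

Definition nowhere : mvf UnitSpace UnitSpace := fun _ _ => False.

Definition fractal (X Y : RepSpace) (f : mvf X Y) : Prop :=
  exists (U V : RepSpace) (g : mvf U V),
    (exists u : U, True) /\
    (forall u : U, exists v, g u v) /\
    forall A : Baire -> Prop, clopenB A ->
      W_eq (restr_mvf g A) f \/ W_eq (restr_mvf g A) nowhere.

(* Main.v *)
Require Import Defs.
From mathcomp Require Import all_boot.
From mathcomp Require Import zify.
From Stdlib Require Import Classical ClassicalEpsilon FunctionalExtensionality ProofIrrelevance.
Set Implicit Arguments.
Unset Strict Implicit.
Unset Printing Implicit Defensive.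

Inductive pe : Type :=
| V (i : nat) | Z | Sc (e : pe) | Fn (f : nat -> nat) (e : pe)
| Call1 (F a : pe) | Call2 (F a b : pe) | Call3 (F a b c : pe)
| Rec (b s e : pe).

Fixpoint rec_it (b : nat) (st : nat -> nat -> nat) (m : nat) : nat :=
  match m with 0 => b | m'.+1 => st m' (rec_it b st m') end.

Fixpoint den (e : pe) (env : seq nat) : nat :=
  match e with
  | V i => nth 0 env i
  | Z => 0
  | Sc e => (den e env).+1
  | Fn f e => f (den e env)
  | Call1 F a => den F [:: den a env]
  | Call2 F a b => den F [:: den a env; den b env]
  | Call3 F a b c => den F [:: den a env; den b env; den c env]
  | Rec b s e => rec_it (den b env) (fun j acc => den s [:: j, acc & env]) (den e env)
  end.

Fixpoint okp (e : pe) : Prop :=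
  match e with
  | V _ | Z => True
  | Sc e => okp e
  | Fn f e => computable_nat f /\ okp e
  | Call1 F a => okp F /\ okp a
  | Call2 F a b => okp F /\ okp a /\ okp b
  | Call3 F a b c => okp F /\ okp a /\ okp b /\ okp c
  | Rec b s e => okp b /\ okp s /\ okp e
  end.

Fixpoint bnd (e : pe) : nat :=
  match e with
  | V i => i.+1
  | Z => 0
  | Sc e => bnd e
  | Fn _ e => bnd e
  | Call1 _ a => bnd a
  | Call2 _ a b => maxn (bnd a) (bnd b)
  | Call3 _ a b c => maxn (bnd a) (maxn (bnd b) (bnd c))
  | Rec b s e => maxn (bnd b) (maxn (bnd s - 2) (bnd e))
  end.

Lemma rec_it_ext b f g m : (forall j acc, f j acc = g j acc) -> rec_it b f m = rec_it b g m.
Proof. by move=> H; elim: m => //= m ->. Qed.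

Lemma den_agree e env env' :
  (forall i, i < bnd e -> nth 0 env i = nth 0 env' i) -> den e env = den e env'.
Proof.
elim: e env env' => [i|| e IH | f e IH | F _ a IHa | F _ a IHa b IHb | F _ a IHa b IHb c IHc
  | b IHb s IHs e IHe] env env' H /=.
- by apply: H.
- by [].
- by rewrite (IH _ env').
- by rewrite (IH _ env').
- by rewrite (IHa _ env').
- by rewrite (IHa _ env') ?(IHb _ env') // => i Hi; apply: H; rewrite leq_max Hi ?orbT.
- rewrite (IHa _ env') ?(IHb _ env') ?(IHc _ env') // => i Hi; apply: H;
    rewrite !leq_max Hi ?orbT //.
- rewrite (IHe _ env'); last by move=> i Hi; apply: H; rewrite !leq_max Hi ?orbT.
  rewrite (IHb _ env'); last by move=> i Hi; apply: H; rewrite !leq_max Hi ?orbT.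
  apply: rec_it_ext => j acc; apply: IHs => -[|[|i]] //= Hi; apply: H.
  rewrite /= !leq_max; apply/orP; right; apply/orP; left; lia.
Qed.

Definition projs (N : nat) : list recf := map RProj (iota 0 N).

Lemma evalL_projs env s : evalL (map RProj s) env (map (nth 0 env) s).
Proof. by elim: s => [|i s IH] /=; constructor => //; constructor. Qed.

Lemma nth_projs env N i : i < N -> nth 0 (map (nth 0 env) (iota 0 N)) i = nth 0 env i.
Proof. by move=> H; rewrite (nth_map 0) ?size_iota // nth_iota. Qed.

Lemma compile e : okp e -> exists r, forall env, evalR r env (den e env).
Proof.
elim: e => [i|| e IH | f e IH | F IF a IHa | F IF a IHa b IHb | F IF a IHa b IHb c IHc
  | b IHb s IHs e IHe] /=.
- by exists (RProj i) => env; constructor.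
- by exists RZero => env; constructor.
- move=> /IH [r Hr]; exists (RComp RSucc [:: r]) => env.
  apply: (eComp (ys := [:: den e env])); first by repeat constructor.
  exact: (eSucc [:: den e env]).
- move=> [[rf Hf] /IH [r Hr]]; exists (RComp rf [:: r]) => env.
  apply: (eComp (ys := [:: den e env])); first by repeat constructor.
  exact: Hf.
- move=> [/IF [rF HF] /IHa [ra Ha]]; exists (RComp rF [:: ra]) => env.
  by apply: (eComp (ys := [:: den a env])); first by repeat constructor.
- move=> [/IF [rF HF] [/IHa [ra Ha] /IHb [rb Hb]]]; exists (RComp rF [:: ra; rb]) => env.
  by apply: (eComp (ys := [:: den a env; den b env])); first by repeat constructor.
- move=> [/IF [rF HF] [/IHa [ra Ha] [/IHb [rb Hb] /IHc [rc Hc]]]].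
  exists (RComp rF [:: ra; rb; rc]) => env.
  by apply: (eComp (ys := [:: den a env; den b env; den c env])); first by repeat constructor.
- move=> [/IHb [rb Hb] [/IHs [rs Hs] /IHe [re He]]].
  set N := maxn (bnd b) (bnd s - 2).
  exists (RComp (RPrec rb rs) (re :: projs N)) => env.
  set l := map (nth 0 env) (iota 0 N).
  apply: (eComp (ys := den e env :: l)).
    by constructor => //; exact: evalL_projs.
  elim: (den e env) => [|m IH] /=.
  + apply: ePrec0; have -> : den b env = den b l.
      by apply: den_agree => i Hi; rewrite nth_projs //; rewrite leq_max Hi.
    exact: Hb.
  + apply: ePrecS IH _.
    have -> : den s [:: m, rec_it (den b env) (fun j acc => den s [:: j, acc & env]) m & env]
       = den s [:: m, rec_it (den b env) (fun j acc => den s [:: j, acc & env]) m & l].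
      apply: den_agree.
      move=> [|[|i]] //= Hi; rewrite nth_projs //; rewrite leq_max; apply/orP; right; lia.
    exact: Hs.
Qed.

Lemma compile1 e : okp e -> computable_nat (fun x => den e [:: x]).
Proof. by move=> /compile [r Hr]; exists r. Qed.

Definition predE := Rec Z (V 0) (V 0).
Lemma predE_den x : den predE [:: x] = x.-1. Proof. by case: x. Qed.
Lemma predE_ok : okp predE. Proof. done. Qed.
#[global] Hint Resolve predE_ok : okdb.
#[global] Opaque predE.

Definition addE := Rec (V 0) (Sc (V 1)) (V 1).
Lemma addE_den x y : den addE [:: x; y] = x + y.
Proof. rewrite /=; elim: y => [|y IH] /=; [by rewrite addn0 | by rewrite IH addnS]. Qed.
Lemma addE_ok : okp addE. Proof. done. Qed.
#[global] Hint Resolve addE_ok : okdb.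
#[global] Opaque addE.

Definition subE := Rec (V 0) (Call1 predE (V 1)) (V 1).
Lemma subE_den x y : den subE [:: x; y] = x - y.
Proof. rewrite /=; elim: y => [|y IH] /=; [by rewrite subn0 | by rewrite predE_den IH subnS]. Qed.
Lemma subE_ok : okp subE. Proof. done. Qed.
#[global] Hint Resolve subE_ok : okdb.
#[global] Opaque subE.

Definition mulE := Rec Z (Call2 addE (V 1) (V 2)) (V 1).
Lemma mulE_den x y : den mulE [:: x; y] = x * y.
Proof. rewrite /=; elim: y => [|y IH] /=; [by rewrite muln0 | by rewrite addE_den IH mulnS addnC]. Qed.
Lemma mulE_ok : okp mulE. Proof. done. Qed.
#[global] Hint Resolve mulE_ok : okdb.
#[global] Opaque mulE.

Definition ifzE := Rec (V 1) (V 4) (V 0).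
Lemma ifzE_den c a b : den ifzE [:: c; a; b] = if c == 0 then a else b.
Proof. by case: c. Qed.
Lemma ifzE_ok : okp ifzE. Proof. done. Qed.
#[global] Hint Resolve ifzE_ok : okdb.
#[global] Opaque ifzE.

Definition lebE := Call3 ifzE (Call2 subE (V 0) (V 1)) (Sc Z) Z.
Lemma lebE_den x y : den lebE [:: x; y] = (x <= y).
Proof. by rewrite /= subE_den ifzE_den subn_eq0; case: (x <= y). Qed.
Lemma lebE_ok : okp lebE. Proof. done. Qed.
#[global] Hint Resolve lebE_ok : okdb.
#[global] Opaque lebE.

Definition ltbE := Call2 lebE (Sc (V 0)) (V 1).
Lemma ltbE_den x y : den ltbE [:: x; y] = (x < y).
Proof. by rewrite /= lebE_den. Qed.
Lemma ltbE_ok : okp ltbE. Proof. done. Qed.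
#[global] Hint Resolve ltbE_ok : okdb.
#[global] Opaque ltbE.

Definition dblE := Call2 addE (V 0) (V 0).
Lemma dblE_den x : den dblE [:: x] = x.*2.
Proof. by rewrite /= addE_den addnn. Qed.
Lemma dblE_ok : okp dblE. Proof. done. Qed.
#[global] Hint Resolve dblE_ok : okdb.
#[global] Opaque dblE.

Definition halfE := Rec Z (Call2 addE (V 1) (Call2 lebE (Call1 dblE (Sc (V 0))) (V 2))) (V 0).
Lemma halfE_den x : den halfE [:: x] = x./2.
Proof.
rewrite /=.
have H : forall m, rec_it 0 (fun j acc => den addE [:: acc; den lebE [:: den dblE [:: j.+1]; x]]) m
   = minn m x./2.
  elim=> [|m IH] /=; first by rewrite min0n.
  rewrite addE_den lebE_den dblE_den IH -geq_half_double.
  case: (leqP m.+1 x./2) => h /=; lia.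
rewrite H; apply/minn_idPr; rewrite -{2}(odd_double_half x); lia.
Qed.
Lemma halfE_ok : okp halfE. Proof. done. Qed.
#[global] Hint Resolve halfE_ok : okdb.
#[global] Opaque halfE.

Definition tri t := (t * t.+1)./2.
Lemma triS t : tri t.+1 = tri t + t.+1.
Proof.
rewrite /tri; have -> : t.+1 * t.+2 = t * t.+1 + (t.+1).*2 by rewrite -!mul2n !mulSn !mulnS; lia.
by rewrite halfD odd_double andbF doubleK.
Qed.
Lemma tri_mono s t : s <= t -> tri s <= tri t.
Proof. elim: t => [|t IH]; first by rewrite leqn0 => /eqP->. rewrite leq_eqVlt ltnS => /orP[/eqP->//|/IH h].
rewrite triS; lia. Qed.
Lemma tri_ge t : t <= tri t.
Proof. elim: t => // t IH; rewrite triS; lia. Qed.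
Lemma cpair_tri a b : cpair a b = tri (a + b) + b.
Proof. by rewrite /cpair divn2. Qed.

Definition triE := Call1 halfE (Call2 mulE (V 0) (Sc (V 0))).
Lemma triE_den t : den triE [:: t] = tri t.
Proof. rewrite /=. by rewrite mulE_den halfE_den. Qed.
Lemma triE_ok : okp triE. Proof. done. Qed.
#[global] Hint Resolve triE_ok : okdb.
#[global] Opaque tri.
#[global] Opaque triE.

Definition cpairE := Call2 addE (Call1 triE (Call2 addE (V 0) (V 1))) (V 1).
Lemma cpairE_den a b : den cpairE [:: a; b] = cpair a b.
Proof. by rewrite /= addE_den triE_den addE_den cpair_tri. Qed.
Lemma cpairE_ok : okp cpairE. Proof. done. Qed.
#[global] Hint Resolve cpairE_ok : okdb.
#[global] Opaque cpairE.

Definition cntE := Rec Z (Call2 addE (V 1) (Call2 lebE (Call1 triE (Sc (V 0))) (V 2))) (V 0).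
Definition cntf x := rec_it 0 (fun j acc => acc + (tri j.+1 <= x)) x.
Lemma cntE_den x : den cntE [:: x] = cntf x.
Proof. rewrite /= /cntf; apply: rec_it_ext => j acc; by rewrite addE_den lebE_den triE_den. Qed.
Lemma cntE_ok : okp cntE. Proof. done. Qed.
#[global] Hint Resolve cntE_ok : okdb.
#[global] Opaque cntE.

Lemma tri_le_cpair a b s : (tri s <= cpair a b) = (s <= a + b).
Proof.
rewrite cpair_tri; case: (leqP s (a + b)) => h.
- by have := tri_mono h; lia.
- have := tri_mono h; rewrite triS; lia.
Qed.

Lemma cnt_cpair a b : cntf (cpair a b) = a + b.
Proof.
rewrite /cntf.
have H : forall m, rec_it 0 (fun j acc => acc + (tri j.+1 <= cpair a b)) m = minn m (a + b).
  elim=> [|m IH] /=; first by rewrite min0n.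
  rewrite IH tri_le_cpair; case: (leqP m.+1 (a + b)) => h /=; lia.
rewrite H; apply/minn_idPr; rewrite cpair_tri; have := tri_ge (a + b); lia.
Qed.

Definition usndE := Call2 subE (V 0) (Call1 triE (Call1 cntE (V 0))).
Definition usnd x := x - tri (cntf x).
Lemma usndE_den x : den usndE [:: x] = usnd x.
Proof. by rewrite /= subE_den triE_den cntE_den. Qed.
Lemma usndE_ok : okp usndE. Proof. done. Qed.
#[global] Hint Resolve usndE_ok : okdb.
#[global] Opaque usndE.
Definition ufstE := Call2 subE (Call1 cntE (V 0)) (Call1 usndE (V 0)).
Definition ufst x := cntf x - usnd x.
Lemma ufstE_den x : den ufstE [:: x] = ufst x.
Proof. by rewrite /= subE_den cntE_den usndE_den. Qed.
Lemma ufstE_ok : okp ufstE. Proof. done. Qed.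
#[global] Hint Resolve ufstE_ok : okdb.
#[global] Opaque ufstE.

Lemma usnd_cpair a b : usnd (cpair a b) = b.
Proof. by rewrite /usnd cnt_cpair cpair_tri addKn. Qed.
Lemma ufst_cpair a b : ufst (cpair a b) = a.
Proof. by rewrite /ufst usnd_cpair cnt_cpair addnK. Qed.

Lemma cpair_geb a b : b <= cpair a b.
Proof. rewrite cpair_tri; lia. Qed.

Definition tlE := Call1 usndE (Call1 predE (V 0)).
Definition tlc c := usnd c.-1.
Lemma tlE_den c : den tlE [:: c] = tlc c.
Proof. by rewrite /= predE_den usndE_den. Qed.
Lemma tlE_ok : okp tlE. Proof. done. Qed.
#[global] Hint Resolve tlE_ok : okdb.
#[global] Opaque tlE.
Definition hdE := Call1 ufstE (Call1 predE (V 0)).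
Definition hdc c := ufst c.-1.
Lemma hdE_den c : den hdE [:: c] = hdc c.
Proof. by rewrite /= predE_den ufstE_den. Qed.
Lemma hdE_ok : okp hdE. Proof. done. Qed.
#[global] Hint Resolve hdE_ok : okdb.
#[global] Opaque hdE.

Lemma usnd0 : usnd 0 = 0. Proof. by rewrite /usnd. Qed.
Lemma ufst0 : ufst 0 = 0. Proof. by rewrite /ufst usnd0. Qed.

Lemma tlc_code s : tlc (code_seq s) = code_seq (behead s).
Proof. by case: s => [|x s] /=; rewrite /tlc /= ?usnd0 ?usnd_cpair. Qed.
Lemma hdc_code s : hdc (code_seq s) = head 0 s.
Proof. by case: s => [|x s] /=; rewrite /hdc /= ?ufst0 ?ufst_cpair. Qed.

Definition consE := Sc (Call2 cpairE (V 0) (V 1)).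
Lemma consE_den x c : den consE [:: x; c] = (cpair x c).+1.
Proof. by rewrite /= cpairE_den. Qed.
Lemma consE_ok : okp consE. Proof. done. Qed.
#[global] Hint Resolve consE_ok : okdb.
#[global] Opaque consE.

Definition dropE := Rec (V 1) (Call1 tlE (V 1)) (V 0).
Lemma dropE_den i s : den dropE [:: i; code_seq s] = code_seq (drop i s).
Proof.
rewrite /=; elim: i => [|i IH] /=; first by rewrite drop0.
by rewrite tlE_den IH tlc_code -drop1 drop_drop add1n.
Qed.
Lemma dropE_ok : okp dropE. Proof. done. Qed.
#[global] Hint Resolve dropE_ok : okdb.
#[global] Opaque dropE.

Definition wnthE := Call1 hdE (Call2 dropE (V 0) (V 1)).
Lemma wnthE_den i s : den wnthE [:: i; code_seq s] = nth 0 s i.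
Proof. by rewrite /= dropE_den hdE_den hdc_code -nth0 nth_drop addn0. Qed.
Lemma wnthE_ok : okp wnthE. Proof. done. Qed.
#[global] Hint Resolve wnthE_ok : okdb.
#[global] Opaque wnthE.

Lemma code_size s : size s <= code_seq s.
Proof. elim: s => //= x s IH; have := cpair_geb x (code_seq s); lia. Qed.
Lemma code0 s : (code_seq s == 0) = (s == [::]).
Proof. by case: s. Qed.

Definition wlenE := Rec Z (Call2 addE (V 1) (Call2 ltbE Z (Call2 dropE (V 0) (V 2)))) (V 0).
Lemma wlenE_den s : den wlenE [:: code_seq s] = size s.
Proof.
rewrite /=.
have H : forall m, rec_it 0 (fun j acc => den addE [:: acc; den ltbE [:: 0; den dropE [:: j; code_seq s]]]) m
   = minn m (size s).
  elim=> [|m IH] /=; first by rewrite min0n.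
  rewrite addE_den ltbE_den dropE_den IH lt0n code0 -size_eq0 size_drop subn_eq0.
  case: (leqP (size s) m) => h /=; lia.
by rewrite H; apply/minn_idPr; apply: code_size.
Qed.
Lemma wlenE_ok : okp wlenE. Proof. done. Qed.
#[global] Hint Resolve wlenE_ok : okdb.
#[global] Opaque wlenE.

Definition tabE (F : pe) := Rec Z (Call2 consE (Call2 F (Call2 subE (V 2) (Sc (V 0))) (V 3)) (V 1)) (V 0).
Lemma tabE_den F m q :
  den (tabE F) [:: m; q] = code_seq (map (fun i => den F [:: i; q]) (iota 0 m)).
Proof.
rewrite /=.
have H : forall j, j <= m -> rec_it 0 (fun j acc => den consE [:: den F [:: den subE [:: m; j.+1]; q]; acc]) j
   = code_seq (map (fun i => den F [:: i; q]) (iota (m - j) j)).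
  elim=> [|j IH] hj /=; first by [].
  rewrite IH; last lia.
  rewrite consE_den subE_den; have -> : m - j = (m - j.+1).+1 by lia.
  by [].
by rewrite H // subnn.
Qed.
Lemma tabE_ok F : okp F -> okp (tabE F). Proof. by move=> h; rewrite /=; repeat split; auto with okdb. Qed.
#[global] Opaque tabE.
#[global] Hint Resolve tabE_ok : okdb.

Definition Xm1E (X : pe) := Call1 predE (Call2 X (V 0) (V 1)).
Definition lvE (X L : pe) := Call2 L (Call2 cpairE (V 2) (Call2 (tabE (Xm1E X)) (V 0) (V 3))) (V 3).
Definition innerE (X L : pe) :=
  Call3 ifzE (lvE X L) (Sc Z) (Call3 ifzE (Call1 predE (lvE X L)) Z (lvE X L)).
Definition stepE (X L : pe) :=
  Call3 ifzE (V 1)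
    (Call3 ifzE (V 0) (innerE X L) (Call3 ifzE (Call2 X (Call1 predE (V 0)) (V 3)) (Sc Z) (innerE X L)))
    (V 1).
Definition ApplyE (X L Bd : pe) := Call1 predE (Rec Z (stepE X L) (Sc (Call1 Bd (V 1)))).

Lemma ApplyE_ok X L Bd : okp X -> okp L -> okp Bd -> okp (ApplyE X L Bd).
Proof. by move=> *; rewrite /=; repeat split; auto with okdb. Qed.
#[global] Hint Resolve ApplyE_ok : okdb.

Section ApplySem.
Variables (X L Bd : pe) (n q : nat).
Let Xf m := den X [:: m; q].
Let Lf i := den L [:: i; q].
Definition codeK K := code_seq (map (fun i => (den X [:: i; q]).-1) (iota 0 K)).
Definition lvK K := den L [:: cpair n (codeK K); q].
Definition innerF K := if lvK K == 0 then 1 else if (lvK K).-1 == 0 then 0 else lvK K.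
Definition stepF K st :=
  if st == 0 then (if K == 0 then innerF K else if den X [:: K.-1; q] == 0 then 1 else innerF K)
  else st.

Lemma ApplyE_den : den (ApplyE X L Bd) [:: n; q] = (rec_it 0 stepF (den Bd [:: q]).+1).-1.
Proof.
change (den (ApplyE X L Bd) [:: n; q]) with
  (den predE [:: rec_it 0 (fun j acc => den (stepE X L) [:: j, acc, n & [:: q]]) (den Bd [:: q]).+1]).
rewrite predE_den; congr (_.-1); apply: rec_it_ext => K st.
rewrite /stepF /innerF /lvK /codeK /= !ifzE_den !predE_den !cpairE_den !tabE_den /=.
by under eq_map => i do rewrite predE_den.
Qed.
End ApplySem.

Definition pre (x : Baire) K := code_seq (Defs.prefix x K).

Lemma size_prefix p k : size (Defs.prefix p k) = k.
Proof. by rewrite /Defs.prefix size_map size_iota. Qed.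
Lemma nth_prefix p k m : m < k -> nth 0 (Defs.prefix p k) m = p m.
Proof. by move=> h; rewrite /Defs.prefix (nth_map 0) ?size_iota // nth_iota. Qed.

Lemma codeK_pref X q x K : (forall m, m < K -> den X [:: m; q] = (x m).+1) ->
  codeK X q K = pre x K.
Proof.
move=> H; rewrite /codeK /pre /Defs.prefix; congr code_seq; apply/eq_in_map => i.
by rewrite mem_iota add0n => /H ->.
Qed.

Lemma stepF_nz X L n q K st : st != 0 -> stepF X L n q K st = st.
Proof. by rewrite /stepF => /negbTE ->. Qed.

Lemma rec_it_nz f b K K' : (forall K st, st != 0 -> f K st = st) -> rec_it b f K != 0 ->
  K <= K' -> rec_it b f K' = rec_it b f K.
Proof.
move=> Hf Hnz; elim: K' => [|K' IH]; first by rewrite leqn0 => /eqP ->.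
rewrite leq_eqVlt => /orP [/eqP -> //| ]; rewrite ltnS => /IH {}IH /=.
by rewrite IH Hf // -IH.
Qed.

Section ApplyProof.
Variables (X L : pe) (n q : nat) (a : nat -> nat) (x : Baire).
Hypothesis HX : forall m, den X [:: m; q] = 0 \/ den X [:: m; q] = (x m).+1.
Hypothesis HL : forall i, den L [:: i; q] = 0 \/ den L [:: i; q] = (a i).+1.
Variable k : nat.
Hypothesis Hk : 0 < a (cpair n (pre x k)).
Hypothesis Hlt : forall j, j < k -> a (cpair n (pre x j)) = 0.

Lemma apply_inv K : let st := rec_it 0 (stepF X L n q) K in
  (st = 0 /\ K <= k /\ forall m, m.+1 < K -> den X [:: m; q] <> 0) \/ st = 1 \/
  st = (a (cpair n (pre x k))).+1.
Proof.
elim: K => [|K IH] /=; first by left; split; [|split].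
case: IH => [[-> [Kk HXK]] | [-> | ->]]; last 2 first.
- by right; left; rewrite stepF_nz.
- by right; right; rewrite stepF_nz.
rewrite /stepF eqxx.
have inner : (forall m, m < K -> den X [:: m; q] <> 0) ->
  (innerF X L n q K = 0 /\ K.+1 <= k /\ forall m, m.+1 < K.+1 -> den X [:: m; q] <> 0) \/
  innerF X L n q K = 1 \/ innerF X L n q K = (a (cpair n (pre x k))).+1.
  move=> HXm.
  have Hc : codeK X q K = pre x K.
    apply: codeK_pref => m /HXm; by case: (HX m).
  rewrite /innerF /lvK Hc.
  case: (HL (cpair n (pre x K))) => ->; first by right; left.
  rewrite /=; case: (ltngtP K k) => hK.
  - rewrite Hlt //=; left; split => //; split => //.
  - lia.
  - subst K; move: Hk; case: (a _) => // v _ /=; by right; right.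
case: (K =P 0) => [K0|/eqP K0].
- by subst K; apply: inner => m; lia.
- case: (den X [:: K.-1; q] =P 0) => [_|/eqP XK]; first by right; left.
  apply: inner => m hm; case: (ltngtP m.+1 K) => h.
  + exact: HXK.
  + lia.
  + by move: XK; rewrite -h /= => /eqP.
Qed.

Lemma apply_sound Bd : den (ApplyE X L Bd) [:: n; q] = 0 \/
  den (ApplyE X L Bd) [:: n; q] = a (cpair n (pre x k)).
Proof.
rewrite ApplyE_den; case: (apply_inv (den Bd [:: q]).+1) => [[-> _]|[->|->]]; by [left|left|right].
Qed.

Lemma apply_complete Bd : k <= den Bd [:: q] -> (forall m, m < k -> den X [:: m; q] <> 0) ->
  (forall j, j <= k -> den L [:: cpair n (pre x j); q] <> 0) ->
  den (ApplyE X L Bd) [:: n; q] = a (cpair n (pre x k)).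
Proof.
move=> hB HXk HLk.
have Hc : forall K, K <= k -> codeK X q K = pre x K.
  move=> K hK; apply: codeK_pref => m hm; have : den X [:: m; q] <> 0 by apply: HXk; lia.
  by case: (HX m).
have Z0 : forall K, K <= k -> rec_it 0 (stepF X L n q) K = 0.
  elim=> [|K IH] hK //=; rewrite IH; last lia.
  rewrite /stepF eqxx.
  have -> : innerF X L n q K = 0.
    rewrite /innerF /lvK Hc; last lia.
    case: (HL (cpair n (pre x K))) => [H0|->]; first by exfalso; apply: (HLk K) => //; lia.
    by rewrite /= Hlt.
  case: (K == 0) => //; case: (den X [:: K.-1; q] =P 0) => // h; exfalso; apply: (HXk K.-1) => //; lia.
have Sk : rec_it 0 (stepF X L n q) k.+1 = (a (cpair n (pre x k))).+1.
  rewrite /= Z0 // /stepF eqxx.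
  have -> : innerF X L n q k = (a (cpair n (pre x k))).+1.
    rewrite /innerF /lvK Hc //.
    case: (HL (cpair n (pre x k))) => [H0|->]; first by exfalso; apply: (HLk k).
    by move: Hk; case: (a _).
  case: (k =P 0) => [_|k0] //; case: (den X [:: k.-1; q] =P 0) => // h; exfalso; apply: (HXk k.-1) => //; lia.
rewrite ApplyE_den (@rec_it_nz _ _ k.+1) ?Sk //.
all: try by move=> K st; apply: stepF_nz.
Qed.
End ApplyProof.

Lemma eta_def a p q : eta a p q <-> forall n, exists k,
  0 < a (cpair n (pre p k)) /\ (forall j, j < k -> a (cpair n (pre p j)) = 0) /\
  q n = (a (cpair n (pre p k))).-1.
Proof. by []. Qed.

Lemma eta_intro c p q :
  (forall n j, c (cpair n (pre p j)) = 0 \/ c (cpair n (pre p j)) = (q n).+1) ->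
  (forall n, exists j, c (cpair n (pre p j)) <> 0) -> eta c p q.
Proof.
move=> H1 H2 n.
have ex : exists j, c (cpair n (pre p j)) != 0 by case: (H2 n) => j /eqP; exists j.
case: (ex_minnP ex) => k Hk Hmin; exists k; split; first by rewrite lt0n.
split.
- move=> j hj; apply/eqP; apply: contraTT hj => /Hmin; lia.
- by case: (H1 n k) Hk => ->.
Qed.

Lemma eta_fun a p q1 q2 : eta a p q1 -> eta a p q2 -> q1 = q2.
Proof.
move=> H1 H2; apply: functional_extensionality => n.
case: (H1 n) => k1 [P1 [L1 ->]]; case: (H2 n) => k2 [P2 [L2 ->]].
case: (ltngtP k1 k2) => h.
- by move: (L2 _ h); move: P1; rewrite /pre => ? ?; lia.
- by move: (L1 _ h); move: P2; rewrite /pre => ? ?; lia.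
- by rewrite h.
Qed.

Definition assoc (Phi : pe) := fun x => den Phi [:: ufst x; usnd x].
Lemma assoc_ok Phi : okp Phi -> computable_nat (assoc Phi).
Proof.
move=> h; have := @compile1 (Call2 Phi (Call1 ufstE (V 0)) (Call1 usndE (V 0))).
case; first by rewrite /=; repeat split; auto with okdb.
move=> r Hr; exists r => x; move: (Hr x); by rewrite /= ufstE_den usndE_den.
Qed.
Lemma assoc_cpair Phi n c : assoc Phi (cpair n c) = den Phi [:: n; c].
Proof. by rewrite /assoc ufst_cpair usnd_cpair. Qed.

Definition approx (Phi : pe) (p q : Baire) :=
  (forall n j, den Phi [:: n; pre p j] = 0 \/ den Phi [:: n; pre p j] = (q n).+1) /\
  (forall n, exists J, forall j, J <= j -> den Phi [:: n; pre p j] = (q n).+1).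

Lemma approx_eta Phi p q : approx Phi p q -> eta (assoc Phi) p q.
Proof.
move=> [H1 H2]; apply: eta_intro => [n j|n]; rewrite /assoc ?ufst_cpair ?usnd_cpair //.
by case: (H2 n) => J HJ; exists J; rewrite ufst_cpair usnd_cpair HJ.
Qed.

Lemma fin_bound (P : nat -> nat -> Prop) :
  (forall m, exists J, forall j, J <= j -> P m j) ->
  forall K, exists J, forall j, J <= j -> forall m, m < K -> P m j.
Proof.
move=> H; elim=> [|K [J HJ]]; first by exists 0.
case: (H K) => J' HJ'; exists (maxn J J') => j hj m hm.
case: (ltngtP m K) => h.
- by apply: HJ => //; lia.
- lia.
- by subst m; apply: HJ'; lia.
Qed.

Definition XwE := Call3 ifzE (Call2 ltbE (V 0) (Call1 wlenE (V 1))) Z (Sc (Call2 wnthE (V 0) (V 1))).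
Lemma XwE_ok : okp XwE. Proof. by rewrite /=; repeat split; auto with okdb. Qed.
#[global] Hint Resolve XwE_ok : okdb.
Lemma XwE_den m p j : den XwE [:: m; pre p j] = if m < j then (p m).+1 else 0.
Proof.
rewrite /= /pre wlenE_den ltbE_den ifzE_den size_prefix wnthE_den.
by case: (ltnP m j) => h //=; rewrite nth_prefix.
Qed.
#[global] Opaque XwE.

Definition BdE := Call1 wlenE (V 0).
Lemma BdE_ok : okp BdE. Proof. by rewrite /=; auto with okdb. Qed.
#[global] Hint Resolve BdE_ok : okdb.
Lemma BdE_den p j : den BdE [:: pre p j] = j.
Proof. by rewrite /= /pre wlenE_den size_prefix. Qed.
#[global] Opaque BdE.

Definition LaE (a : nat -> nat) := Sc (Fn a (V 0)).

Lemma apply_approx (X : pe) (a : nat -> nat) p x y :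
  approx X p x -> eta a x y -> approx (ApplyE X (LaE a) BdE) p y.
Proof.
move=> [HX1 HX2] Ha; split.
- move=> n j; case: (Ha n) => k [Hk [Hlt Hy]].
  have := @apply_sound X (LaE a) n (pre p j) a x (HX1^~ j) (fun i => or_intror erefl) k Hk Hlt BdE.
  by case=> ->; [left|right; rewrite Hy; move: Hk; case: (a _)].
- move=> n; case: (Ha n) => k [Hk [Hlt Hy]].
  case: (@fin_bound (fun m j => den X [:: m; pre p j] = (x m).+1) HX2 k) => J HJ.
  exists (maxn J k) => j hj.
  rewrite (@apply_complete X (LaE a) n (pre p j) a x (HX1^~ j) (fun i => or_intror erefl) k Hk Hlt BdE).
  + by rewrite Hy; move: Hk; case: (a _).
  + rewrite BdE_den; lia.
  + by move=> m hm; rewrite HJ //; lia.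
  + by [].
Qed.

Lemma Xw_approx p : approx XwE p p.
Proof.
split => [n j|n]; first by rewrite XwE_den; case: (n < j); [right|left].
by exists n.+1 => j hj; rewrite XwE_den hj.
Qed.

Definition Simul (a : nat -> nat) := ApplyE XwE (LaE a) BdE.
Lemma Simul_ok a : computable_nat a -> okp (Simul a).
Proof. by move=> h; apply: ApplyE_ok; rewrite /=; auto with okdb. Qed.
Lemma Simul_approx a p y : eta a p y -> approx (Simul a) p y.
Proof. exact: apply_approx (Xw_approx p). Qed.

Definition comp_assoc (a b : nat -> nat) := assoc (ApplyE (Simul b) (LaE a) BdE).
Lemma comp_ok a b : computable_nat a -> computable_nat b -> computable_nat (comp_assoc a b).
Proof. by move=> ha hb; apply: assoc_ok; apply: ApplyE_ok; rewrite /=; auto using Simul_ok with okdb. Qed.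
Lemma comp_eta a b p q r : eta b p q -> eta a q r -> eta (comp_assoc a b) p r.
Proof. by move=> hb ha; apply: approx_eta; apply: apply_approx ha; apply: Simul_approx. Qed.

Lemma pairB_even p q m : pairB p q m.*2 = p m.
Proof. by rewrite /pairB odd_double doubleK. Qed.
Lemma pairB_odd p q m : pairB p q m.*2.+1 = q m.
Proof. by rewrite /pairB /= odd_double /= uphalf_double. Qed.

Definition PairPhi (A B : pe) :=
  Call3 ifzE (Call2 subE (V 0) (Call1 dblE (Call1 halfE (V 0))))
    (Call2 A (Call1 halfE (V 0)) (V 1)) (Call2 B (Call1 halfE (V 0)) (V 1)).
Lemma PairPhi_ok A B : okp A -> okp B -> okp (PairPhi A B).
Proof. by move=> *; rewrite /=; repeat split; auto with okdb. Qed.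
Lemma PairPhi_den A B n q : den (PairPhi A B) [:: n; q] =
  if odd n then den B [:: n./2; q] else den A [:: n./2; q].
Proof.
rewrite /= subE_den dblE_den halfE_den ifzE_den halfK.
case Hn: (odd n) => /=; last by rewrite subn0 subnn.
have : 0 < n by case: n Hn.
by move=> h; rewrite ifF //; apply/eqP; lia.
Qed.

Lemma pair_approx A B p q1 q2 : approx A p q1 -> approx B p q2 ->
  approx (PairPhi A B) p (pairB q1 q2).
Proof.
move=> [A1 A2] [B1 B2]; split => [n j|n]; rewrite ?PairPhi_den /pairB.
- by case: (odd n); [apply: B1 | apply: A1].
- case Hn: (odd n); [case: (B2 n./2) | case: (A2 n./2)] => J HJ; exists J => j hj;
    by rewrite PairPhi_den Hn HJ.
Qed.

Definition P1E := Call2 XwE (Call1 dblE (V 0)) (V 1).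
Definition P2E := Call2 XwE (Sc (Call1 dblE (V 0))) (V 1).
Lemma P1E_ok : okp P1E. Proof. by rewrite /=; repeat split; auto with okdb. Qed.
Lemma P2E_ok : okp P2E. Proof. by rewrite /=; repeat split; auto with okdb. Qed.
#[global] Hint Resolve P1E_ok P2E_ok : okdb.
Lemma P1E_den n w j : den P1E [:: n; pre w j] = if n.*2 < j then (w n.*2).+1 else 0.
Proof. by rewrite /= dblE_den XwE_den. Qed.
Lemma P2E_den n w j : den P2E [:: n; pre w j] = if n.*2.+1 < j then (w n.*2.+1).+1 else 0.
Proof. by rewrite /= dblE_den XwE_den. Qed.

Lemma P1_approx p q : approx P1E (pairB p q) p.
Proof.
split => [n j|n]; first by rewrite P1E_den pairB_even; case: (_ < _); [right|left].
by exists n.*2.+1 => j hj; rewrite P1E_den pairB_even hj.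
Qed.
Lemma P2_approx p q : approx P2E (pairB p q) q.
Proof.
split => [n j|n]; first by rewrite P2E_den pairB_odd; case: (_ < _); [right|left].
by exists n.*2.+2 => j hj; rewrite P2E_den pairB_odd hj.
Qed.

Lemma const_approx (s : nat -> nat) p : approx (LaE s) p s.
Proof. by split => [n j|n]; [right|exists 0]. Qed.
Lemma LaE_ok s : computable_nat s -> okp (LaE s).
Proof. by move=> h; rewrite /=. Qed.

Definition EvalPhi := ApplyE P2E P1E BdE.
Lemma EvalPhi_ok : okp EvalPhi. Proof. by apply: ApplyE_ok; auto with okdb. Qed.

Lemma eval_approx u x y : eta u x y -> approx EvalPhi (pairB u x) y.
Proof.
move=> Hu; have [X1 X2] := P2_approx u x; have HL := (P1_approx u x).1.
split.
- move=> n j; case: (Hu n) => k [Hk [Hlt Hy]].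
  have := @apply_sound P2E P1E n (pre (pairB u x) j) u x (X1^~ j) (HL^~ j) k Hk Hlt BdE.
  by case=> ->; [left|right; rewrite Hy; move: Hk; case: (u _)].
- move=> n; case: (Hu n) => k [Hk [Hlt Hy]].
  case: (@fin_bound (fun m j => den P2E [:: m; pre (pairB u x) j] = (x m).+1) X2 k) => J HJ.
  case: (@fin_bound (fun m j => den P1E [:: cpair n (pre x m); pre (pairB u x) j] =
           (u (cpair n (pre x m))).+1) (fun m => (P1_approx u x).2 _) k.+1) => J' HJ'.
  exists (maxn k (maxn J J')) => j hj.
  rewrite (@apply_complete P2E P1E n (pre (pairB u x) j) u x (X1^~ j) (HL^~ j) k Hk Hlt BdE).
  + by rewrite Hy; move: Hk; case: (u _).
  + rewrite BdE_den; lia.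
  + by move=> m hm; rewrite HJ //; lia.
  + by move=> m hm; rewrite HJ' //; lia.
Qed.

Definition pair_assoc a b := assoc (PairPhi (Simul a) (Simul b)).
Lemma pair_ok a b : computable_nat a -> computable_nat b -> computable_nat (pair_assoc a b).
Proof. by move=> *; apply: assoc_ok; apply: PairPhi_ok; apply: Simul_ok. Qed.
Lemma pair_eta a b p q r : eta a p q -> eta b p r -> eta (pair_assoc a b) p (pairB q r).
Proof. by move=> ha hb; apply: approx_eta; apply: pair_approx; apply: Simul_approx. Qed.

Definition pi1_assoc := assoc P1E.
Definition pi2_assoc := assoc P2E.
Definition id_assoc := assoc XwE.
Definition const_assoc s := assoc (LaE s).
Definition eval_assoc := assoc EvalPhi.
Lemma pi1_ok : computable_nat pi1_assoc. Proof. by apply: assoc_ok; auto with okdb. Qed.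
Lemma pi2_ok : computable_nat pi2_assoc. Proof. by apply: assoc_ok; auto with okdb. Qed.
Lemma id_ok : computable_nat id_assoc. Proof. by apply: assoc_ok; auto with okdb. Qed.
Lemma const_ok s : computable_nat s -> computable_nat (const_assoc s).
Proof. by move=> h; apply: assoc_ok; apply: LaE_ok. Qed.
Lemma eval_ok : computable_nat eval_assoc. Proof. by apply: assoc_ok; apply: EvalPhi_ok. Qed.
Lemma pi1_eta p q : eta pi1_assoc (pairB p q) p. Proof. exact/approx_eta/P1_approx. Qed.
Lemma pi2_eta p q : eta pi2_assoc (pairB p q) q. Proof. exact/approx_eta/P2_approx. Qed.
Lemma id_eta p : eta id_assoc p p. Proof. exact/approx_eta/Xw_approx. Qed.
Lemma const_eta s p : eta (const_assoc s) p s. Proof. exact/approx_eta/const_approx. Qed.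
Lemma eval_eta u x y : eta u x y -> eta eval_assoc (pairB u x) y.
Proof. by move=> h; apply/approx_eta/eval_approx. Qed.

Definition pick (A : Type) (P : A -> Prop) : option A :=
  match excluded_middle_informative (exists a, P a) with
  | left H => Some (proj1_sig (constructive_indefinite_description P H))
  | right _ => None
  end.
Lemma pick_some A (P : A -> Prop) a : pick P = Some a -> P a.
Proof.
rewrite /pick; case: excluded_middle_informative => // H [<-].
exact: proj2_sig.
Qed.
Lemma pick_ex A (P : A -> Prop) : (exists a, P a) -> exists a, pick P = Some a.
Proof. move=> H; rewrite /pick; case: excluded_middle_informative => [H1|/(_ H)//]; by eexists. Qed.

Fixpoint constE (c : nat) : pe := if c is c'.+1 then Sc (constE c') else Z.
Lemma constE_den c env : den (constE c) env = c. Proof. by elim: c => //= c ->. Qed.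
Lemma const_comp c : computable_nat (fun _ => c).
Proof.
have [|r Hr] := @compile1 (constE c); first by elim: c.
by exists r => x; move: (Hr x); rewrite constE_den.
Qed.

Definition canon (X Y : RepSpace) (f : mvf X Y) : Baire -> option Baire :=
  fun p => pick (fun q => exists x y, delta p x /\ delta q y /\ f x y).
Lemma canon_real X Y (f : mvf X Y) : realizer f (canon f).
Proof.
move=> p x dp [y fxy]; have [q dq] := delta_surj y.
have [q' Hq'] := @pick_ex _ (fun q => exists x y, delta p x /\ delta q y /\ f x y) (ex_intro _ q (ex_intro _ x (ex_intro _ y (conj dp (conj dq fxy))))).
exists q'; split => //; have [x' [y' [dx [dy fx]]]] := pick_some Hq'.
by exists y'; split => //; rewrite (delta_fun dp dx).
Qed.
Lemma canon_sound X Y (f : mvf X Y) p q : canon f p = Some q ->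
  exists x y, delta p x /\ delta q y /\ f x y.
Proof. exact: pick_some. Qed.

Definition upd (G : Baire -> option Baire) p0 q0 : Baire -> option Baire :=
  fun p => if excluded_middle_informative (p = p0) then Some q0 else G p.
Lemma upd_real X Y (f : mvf X Y) G p0 q0 : realizer f G ->
  (forall x, delta p0 x -> (exists y, f x y) -> exists y, delta q0 y /\ f x y) ->
  realizer f (upd G p0 q0).
Proof.
move=> HG H p x dp dom; rewrite /upd; destruct (excluded_middle_informative (p = p0)) as [e|e].
- by subst p; exists q0; split => //; apply: H.
- exact: HG.
Qed.
Lemma upd_at G p0 q0 : upd G p0 q0 p0 = Some q0.
Proof. by rewrite /upd; destruct (excluded_middle_informative (p0 = p0)). Qed.

Lemma W_trans (X Y U V S T : RepSpace) (f : mvf X Y) (g : mvf U V) (h : mvf S T) :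
  W_le f g -> W_le g h -> W_le f h.
Proof.
move=> [a1 [b1 [ca1 [cb1 H1]]]] [a2 [b2 [ca2 [cb2 H2]]]].
exists (comp_assoc a1 (pair_assoc pi1_assoc (comp_assoc a2
          (pair_assoc (comp_assoc b1 pi1_assoc) pi2_assoc)))).
exists (comp_assoc b2 b1).
split; first by apply: comp_ok => //; apply: pair_ok; [exact: pi1_ok|];
  apply: comp_ok => //; apply: pair_ok; [apply: comp_ok => //; exact: pi1_ok | exact: pi2_ok].
split; first by apply: comp_ok.
move=> G HG.
pose G' := fun q => pick (fun s => exists hq r, eta b2 q hq /\ G hq = Some r /\ eta a2 (pairB q r) s).
have HG' : realizer g G'.
  move=> q y dq dom.
  have [hq [r [s [Hb [Gq [Ha [z [dz gz]]]]]]]] := H2 G HG q y dq dom.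
  have [s' Hs'] := @pick_ex _ (fun s => exists hq r, eta b2 q hq /\ G hq = Some r /\ eta a2 (pairB q r) s)
     (ex_intro _ s (ex_intro _ hq (ex_intro _ r (conj Hb (conj Gq Ha))))).
  exists s'; split => //; exists z; split => //.
  have [hq' [r' [Hb' [Gq' Ha']]]] := pick_some Hs'.
  rewrite (eta_fun Hb' Hb) Gq in Gq'; case: Gq' => Er; subst r'.
  by rewrite (eta_fun Ha' Ha).
move=> p x dp dom.
have [h1 [q1 [t [Hb1 [Gq1 [Ha1 Hsol]]]]]] := H1 G' HG' p x dp dom.
have [hq [r [Hb [Gr Ha]]]] := pick_some Gq1.
exists hq, r, t; split; first exact: comp_eta Hb1 Hb.
split => //; split => //.
apply: comp_eta Ha1; apply: pair_eta; first exact: pi1_eta.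
apply: comp_eta Ha; apply: pair_eta; last exact: pi2_eta.
apply: comp_eta Hb1; exact: pi1_eta.
Qed.

Lemma baire_fun (p x y : Baire) : p = x -> p = y -> x = y.
Proof. by move=> -> ->. Qed.
Lemma baire_surj (x : Baire) : exists p : Baire, p = x.
Proof. by exists x. Qed.
Definition BaireSp : RepSpace :=
  {| carrier := Baire; delta := fun p x => p = x; delta_fun := baire_fun; delta_surj := baire_surj |}.

Definition P1 (z : Baire) : Baire := fun j => z j.*2.
Definition P2 (z : Baire) : Baire := fun j => z j.*2.+1.
Lemma P1_pair p q : P1 (pairB p q) = p.
Proof. by apply: functional_extensionality => j; rewrite /P1 pairB_even. Qed.
Lemma P2_pair p q : P2 (pairB p q) = q.
Proof. by apply: functional_extensionality => j; rewrite /P2 pairB_odd. Qed.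
Definition cst (i : nat) : Baire := fun _ => i.+1.

Section K.
Variables (n : nat) (U V : RepSpace) (g : mvf U V).

Definition kfun : mvf BaireSp BaireSp := fun (z r : Baire) =>
  exists A : {set 'I_n}, subset_name (P1 z) A /\
  (forall i : 'I_n, i \in A -> exists s (uu : U), eta (P1 (P2 z)) (pairB (P2 (P2 z)) (cst i)) s /\
      delta s uu /\ exists vv, g uu vv) /\
  exists i : 'I_n, i \in A /\ exists s (uu : U) t (vv : V),
      eta (P1 (P2 z)) (pairB (P2 (P2 z)) (cst i)) s /\ delta s uu /\ delta t vv /\ g uu vv /\
      r = pairB (cst i) t.

Lemma comp_le_k (X' Y' Z' : RepSpace) (f' : mvf Y' Z') (g' : mvf X' Y') :
  W_le f' g -> W_le g' (C_fin n) -> W_le (mv_comp f' g') kfun.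
Proof.
move=> [af [bf [caf [cbf Hf]]]] [ag [bg [cag [cbg Hg]]]].
pose cu := comp_assoc bf ag.
have ccu : computable_nat cu by apply: comp_ok.
exists (comp_assoc af (pair_assoc (comp_assoc ag (pair_assoc pi1_assoc (comp_assoc pi1_assoc pi2_assoc)))
          (comp_assoc pi2_assoc pi2_assoc))).
exists (pair_assoc bg (pair_assoc (const_assoc cu) id_assoc)).
split.
  apply: comp_ok => //; apply: pair_ok; last by apply: comp_ok; exact: pi2_ok.
  apply: comp_ok => //; apply: pair_ok; first exact: pi1_ok.
  by apply: comp_ok; [exact: pi1_ok | exact: pi2_ok].
split; first by apply: pair_ok => //; apply: pair_ok; [exact: const_ok | exact: id_ok].
move=> G HG p x dp [zz [domall [y0 [gxy0 fyz0]]]].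
have domg : exists y, g' x y by exists y0.
have [h0 [q0 [r0 [Hb0 [GC0 _]]]]] := Hg _ (@canon_real _ _ (C_fin n)) p x dp domg.
have [A [i0 [dA [di0 i0A]]]] := canon_sound GC0.
rewrite /= in dA di0; rewrite /C_fin /= in i0A.
have stepI : forall i : 'I_n, i \in A -> exists r1 y, eta ag (pairB p (cst i)) r1 /\ delta r1 y /\ g' x y.
  move=> i iA.
  have HGi : realizer (C_fin n) (upd (canon (C_fin n)) h0 (cst i)).
    apply: upd_real; first exact: canon_real.
    move=> A' dA' _; rewrite (subsp_fun dA' dA); by exists i.
  have [h1 [q1 [r1 [Hb1 [Gq1 [Ha1 [y [dy gy]]]]]]]] := Hg _ HGi p x dp domg.
  rewrite (eta_fun Hb1 Hb0) upd_at in Gq1; case: Gq1 => E; subst q1.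
  by exists r1, y.
have stepS : forall i : 'I_n, i \in A -> exists s (uu : U), eta cu (pairB p (cst i)) s /\ delta s uu /\
   exists vv t, delta t vv /\ g uu vv.
  move=> i /stepI [r1 [y [Ha [dy gy]]]].
  have [h2 [q2 [r2 [Hb2 [Gq2 _]]]]] := Hf _ (@canon_real _ _ g) r1 y dy (domall y gy).
  have [uu [vv [du [dv guv]]]] := canon_sound Gq2.
  exists h2, uu; split; first exact: comp_eta Ha Hb2.
  by split => //; exists vv, q2.
pose z := pairB h0 (pairB cu p).
have Ez1 : P1 z = h0 by rewrite /z P1_pair.
have Ez2 : P1 (P2 z) = cu by rewrite /z P2_pair P1_pair.
have Ez3 : P2 (P2 z) = p by rewrite /z !P2_pair.
have domk : exists r, kfun z r.
  have [s [uu [Hs [du [vv [t [dt guv]]]]]]] := stepS i0 i0A.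
  exists (pairB (cst i0) t), A; rewrite Ez1 Ez2 Ez3; split => //; split.
  + move=> i /stepS [s' [uu' [Hs' [du' [vv' [t' [_ gg']]]]]]]; exists s', uu'; split => //; split => //; by exists vv'.
  + by exists i0; split => //; exists s, uu, t, vv.
have [r' [Gz [rr [Err kz]]]] := HG z z erefl domk.
rewrite /= in Err; subst rr.
case: kz => A' [dA' [_ [i [iA' [s [uu [t [vv [Hs [du [dt [guv Er']]]]]]]]]]]].
rewrite Ez1 in dA'; rewrite (subsp_fun dA' dA) in iA'; rewrite Ez2 Ez3 in Hs.
have [r1 [y [Ha [dy gy]]]] := stepI i iA'.
have HGg : realizer g (upd (canon g) s t).
  apply: upd_real; first exact: canon_real.
  by move=> uu' du' _; rewrite (delta_fun du' du); exists vv.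
have [h2 [q2 [r2 [Hb2 [Gq2 [Ha2 [z' [dz' fz']]]]]]]] := Hf _ HGg r1 y dy (domall y gy).
have E2 : h2 = s by apply: eta_fun (comp_eta Ha Hb2) Hs.
subst h2; rewrite upd_at in Gq2; case: Gq2 => E; subst q2.
exists z, r', r2; split.
  by apply: pair_eta => //; apply: pair_eta; [exact: const_eta | exact: id_eta].
split => //; split; last by exists z'; split => //; split => //; exists y.
rewrite Er'; apply: comp_eta Ha2; apply: pair_eta.
- apply: comp_eta Ha; apply: pair_eta; first exact: pi1_eta.
  apply: comp_eta (pi1_eta _ _); exact: pi2_eta.
- apply: comp_eta (pi2_eta _ _); exact: pi2_eta.
Qed.
End K.

Lemma pre_agree p p' L k : (forall i, i < L -> p' i = p i) -> k <= L -> pre p' k = pre p k.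
Proof.
move=> H hk; rewrite /pre /Defs.prefix; congr code_seq; apply/eq_in_map => i.
rewrite mem_iota add0n => hi; apply: H; lia.
Qed.

Lemma eta_cont a p q N : eta a p q -> exists L, forall p' q', eta a p' q' ->
  (forall i, i < L -> p' i = p i) -> forall j, j < N -> q' j = q j.
Proof.
move=> Hq.
have H1 : forall j, exists L, forall L', L <= L' -> forall p' q', eta a p' q' ->
    (forall i, i < L' -> p' i = p i) -> q' j = q j.
  move=> j; case: (Hq j) => k [Pk [Lk Ek]]; exists k => L' hL' p' q' Hq' Hag.
  case: (Hq' j) => k' [Pk' [Lk' Ek']].
  have E : forall kk, kk <= k -> code_seq (Defs.prefix p' kk) = code_seq (Defs.prefix p kk).
    by move=> kk hk; apply: (pre_agree Hag); lia.
  case: (ltngtP k' k) => h.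
  - by move: (Lk _ h) Pk'; rewrite E //; [lia|lia].
  - by move: (Lk' _ h) Pk; rewrite E // => ->.
  - by subst k'; rewrite Ek Ek' E.
case: (@fin_bound (fun j L' => forall p' q', eta a p' q' -> (forall i, i < L' -> p' i = p i) -> q' j = q j) H1 N).
move=> L HL; exists L => p' q' Hq' Hag j hj; exact: (HL L (leqnn L) j hj p' q' Hq' Hag).
Qed.

Lemma max_exists (P : nat -> Prop) B s0 : P s0 -> (forall s, P s -> s <= B) ->
  exists s, P s /\ forall s', P s' -> s' <= s.
Proof.
move=> Ps0 HB.
have : forall m s, P s -> B - s <= m -> exists s, P s /\ forall s', P s' -> s' <= s.
  elim=> [|m IH] s Ps hm.
  - exists s; split => // s' Ps'; have := HB _ Ps'; have := HB _ Ps; lia.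
  - case: (classic (exists s', P s' /\ s < s')) => [[s' [Ps' hs']]|no].
    + apply: (IH s') => //; have := HB _ Ps'; lia.
    + exists s; split => // s' Ps'; case: (leqP s' s) => // h; exfalso; apply: no; by exists s'.
by move=> /(_ (B - s0) s0 Ps0 (leqnn _)).
Qed.

Lemma clopenT : clopenB (fun _ => True).
Proof. by split => p H; [exists 0 | exfalso; apply: H]. Qed.

Definition cyl (p0 : Baire) L := fun p : Baire => forall i, i < L -> p i = p0 i.
Lemma clopen_cyl p0 L : clopenB (cyl p0 L).
Proof.
split => p Hp; exists L => q Hq.
- by move=> i hi; rewrite Hq // Hp.
- move=> Hc; apply: Hp => i hi; by rewrite -Hq // Hc.
Qed.

Lemma not_nowhere (X Y : RepSpace) (F : mvf X Y) p x : delta p x -> (exists y, F x y) ->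
  ~ W_le F nowhere.
Proof.
move=> dp dom [a [b [_ [_ H]]]].
have HG : realizer nowhere (fun _ => None) by move=> ? ? ? [].
by have [h [q [r [_ [// _]]]]] := H _ HG p x dp dom.
Qed.

Lemma pairB_P z : pairB (P1 z) (P2 z) = z.
Proof.
apply: functional_extensionality => m; rewrite /pairB /P1 /P2.
case Hm: (odd m); congr z; rewrite -[RHS](odd_double_half m) Hm; lia.
Qed.

Definition Rset n (z : Baire) m : {set 'I_n} := [set i : 'I_n | has (fun j => P1 z j == i.+1) (iota 0 m)].

Lemma Rset_mono n z m m' i : m <= m' -> i \in Rset n z m -> i \in Rset n z m'.
Proof.
move=> h; rewrite !inE => /hasP [j]; rewrite mem_iota add0n => hj e; apply/hasP; exists j => //.
rewrite mem_iota; lia.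
Qed.

Section Main.
Variables (X Y U V : RepSpace) (f : mvf X Y) (g : mvf U V) (n : nat).
Variables (U0 V0 : RepSpace) (g0 : mvf U0 V0).
Hypothesis gtot : forall u : U0, exists v, g0 u v.
Variables (a b : nat -> nat).
Hypothesis ca : computable_nat a.
Hypothesis cb : computable_nat b.
Let T := fun _ : Baire => True.
Hypothesis Hab : forall G, realizer (kfun n g) G ->
  forall p (x : RestrSpace U0 T), delta p x -> (exists y, restr_mvf g0 T x y) ->
  exists h q r, eta b p h /\ G h = Some q /\ eta a (pairB p q) r /\
     exists y, delta r y /\ restr_mvf g0 T x y.

Lemma nameT p (u : U0) : delta p u -> exists z, eta b p z /\ exists r, kfun n g z r.
Proof.
move=> dp.
pose xT : RestrSpace U0 T := exist _ u (ex_intro _ p (conj I dp)).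
have dx : delta p xT by split.
have [v gv] := gtot u.
have [h [q [r [Hb [Gq _]]]]] := Hab (@canon_real _ _ (kfun n g)) dx (ex_intro _ v gv).
have [zz [rr [dz [dr kz]]]] := canon_sound Gq.
rewrite /= in dz dr; subst zz rr; by exists h; split => //; exists q.
Qed.

Variable u0 : U0.

Lemma card_R z m : #|Rset n z m| <= n.
Proof. by have := max_card (Rset n z m); rewrite card_ord. Qed.

Lemma main_reduction : exists W : Baire -> Prop, clopenB W /\ (exists p (u : U0), W p /\ delta p u) /\
  W_le (restr_mvf g0 W) g.
Proof.
have [p0 dp0] := delta_surj u0.
have [z00 [Hz00 _]] := nameT dp0.
pose S s := exists p (u : U0) z m, delta p u /\ eta b p z /\ #|Rset n z m| = s.
have [M [[p1 [u1 [z1 [m1 [dp1 [Hz1 cardM]]]]]] Mmax]] :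
    exists M, S M /\ forall s', S s' -> s' <= M.
  apply: (@max_exists S n (#|Rset n z00 0|)); first by exists p0, u0, z00, 0.
  by move=> s [p [u [z [m [_ [_ <-]]]]]]; apply: card_R.
have [L HL] := eta_cont (m1.*2) Hz1.
pose W := cyl p1 L.
pose R0 := Rset n z1 m1.
have key : forall p (u : U0) z, delta p u -> W p -> eta b p z -> forall A, subset_name (P1 z) A -> A = ~: R0.
  move=> p u z dp Wp Hz A sA.
  have agree : forall j, j < m1 -> P1 z j = P1 z1 j.
    by move=> j hj; rewrite /P1; apply: (HL p z Hz Wp); lia.
  have sub : forall m, m1 <= m -> Rset n z m = R0.
    move=> m hm; apply/eqP; rewrite eq_sym eqEcard; apply/andP; split.
    - apply/subsetP => i; rewrite !inE => /hasP [j]; rewrite mem_iota add0n => hj e.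
      apply/hasP; exists j; first by rewrite mem_iota; lia.
      by rewrite agree.
    - rewrite /R0 cardM; apply: Mmax; by exists p, u, z, m.
  apply/setP => i; rewrite in_setC; apply/idP/idP.
  - move=> /sA HiA; apply/negP; rewrite !inE => /hasP [j]; rewrite mem_iota add0n => hj /eqP e.
    apply: HiA; exists j; by rewrite agree.
  - move=> Hi; apply/sA => -[j e]; move/negP: Hi; apply.
    rewrite -(sub (maxn m1 j.+1)) ?leq_maxl // inE; apply/hasP; exists j; first by rewrite mem_iota; lia.
    by rewrite e.
have W1 : W p1 by [].
have [istar iR] : exists istar : 'I_n, istar \in ~: R0.
  have [z1' [Hz1' [r1 [A1 [sA1 [_ [i [iA _]]]]]]]] := nameT dp1.
  rewrite (eta_fun Hz1' Hz1) in sA1.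
  by exists i; rewrite -(key p1 u1 z1 dp1 W1 Hz1 A1 sA1).
exists W; split; first exact: clopen_cyl.
split; first by exists p1, u1.
exists (comp_assoc a (pair_assoc pi1_assoc (pair_assoc (const_assoc (cst istar)) pi2_assoc))).
exists (comp_assoc eval_assoc (pair_assoc (comp_assoc pi1_assoc (comp_assoc pi2_assoc b))
          (pair_assoc (comp_assoc pi2_assoc (comp_assoc pi2_assoc b)) (const_assoc (cst istar))))).
have ccst : computable_nat (cst istar) by apply: (const_comp istar.+1).
split.
  apply: comp_ok => //; apply: pair_ok; first exact: pi1_ok.
  by apply: pair_ok; [exact: const_ok | exact: pi2_ok].
split.
  apply: comp_ok; first exact: eval_ok.
  apply: pair_ok; first by apply: comp_ok; [exact: pi1_ok | apply: comp_ok => //; exact: pi2_ok].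
  apply: pair_ok; last exact: const_ok.
  by apply: comp_ok; [exact: pi2_ok | apply: comp_ok => //; exact: pi2_ok].
move=> G HG p x [Wp dp] dom.
have [z [Hz [r0 kz]]] := nameT dp.
case: (kz) => A [sA [Hall _]].
have EA := key p _ z dp Wp Hz A sA.
have iA : istar \in A by rewrite EA.
have [s [uu [Hs [du [vv guv]]]]] := Hall istar iA.
have [t [Gs [vv' [dt guv']]]] := HG s uu du (ex_intro _ vv guv).
have HGk : realizer (kfun n g) (upd (canon (kfun n g)) z (pairB (cst istar) t)).
  apply: upd_real; first exact: canon_real.
  move=> z' dz' _; rewrite /= in dz'; subst z'.
  exists (pairB (cst istar) t); split => //; exists A; split => //; split => //.
  by exists istar; split => //; exists s, uu, t, vv'.
pose xT : RestrSpace U0 T := exist _ (proj1_sig x) (ex_intro _ p (conj I dp)).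
have dxT : delta p xT by split.
have [h [q [r [Hb [Gq [Ha [y [dy gy]]]]]]]] := Hab HGk dxT dom.
rewrite (eta_fun Hb Hz) upd_at in Gq; case: Gq => Eq; subst q.
exists s, t, r; split.
  have Hz' : eta b p (pairB (P1 z) (P2 z)) by rewrite pairB_P.
  have E1 : eta (comp_assoc pi2_assoc b) p (pairB (P1 (P2 z)) (P2 (P2 z))).
    rewrite pairB_P; exact: (comp_eta Hz' (pi2_eta _ _)).
  have E2 := comp_eta E1 (pi1_eta _ _).
  have E3 := comp_eta E1 (pi2_eta _ _).
  have E4 := pair_eta E3 (const_eta (cst istar) p).
  have E5 := pair_eta E2 E4.
  exact: (comp_eta E5 (eval_eta Hs)).
split => //; split; last by exists y.
have F1 := pair_eta (const_eta (cst istar) (pairB p t)) (pi2_eta p t).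
have F2 := pair_eta (pi1_eta p t) F1.
exact: (comp_eta F2 Ha).
Qed.
End Main.

Theorem theorem12 (X Y U V : RepSpace) (f : mvf X Y) (g : mvf U V) (n : nat) :
  fractal f -> 1 <= n ->
  (exists (C D : RepSpace) (h : mvf C D),
      is_comp_product g (C_fin n) h /\ W_le f h) ->
  W_le f g.
Proof.
move=> [U0 [V0 [g0 [[u0 _] [gtot Hfr]]]]] _ [C [D [h [[_ Hsup] Hfh]]]].
have Hhk : W_le h (kfun n g).
  apply: Hsup => X' Y' Z' f' g'; exact: comp_le_k.
have Hfk := W_trans Hfh Hhk.
have HgT : W_le (restr_mvf g0 (fun _ => True)) f.
  case: (Hfr _ clopenT) => [[//]|[Hn _]]; exfalso.
  have [p dp] := delta_surj u0.
  pose xT : RestrSpace U0 (fun _ => True) := exist _ u0 (ex_intro _ p (conj I dp)).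
  have dx : delta p xT by split.
  have [v gv] := gtot u0.
  exact: (not_nowhere dx (ex_intro _ v gv) Hn).
have [a [b [ca [cb Hab]]]] := W_trans HgT Hfk.
have [W [cW [[p [u [Wp dp]]] HWg]]] := main_reduction gtot ca cb Hab u0.
case: (Hfr W cW) => [[_ HfW]|[Hn _]].
- exact: W_trans HfW HWg.
- exfalso.
  pose xW : RestrSpace U0 W := exist _ u (ex_intro _ p (conj Wp dp)).
  have dx : delta p xW by split.
  have [v gv] := gtot u.
  exact: (not_nowhere dx (ex_intro _ v gv) Hn).
Qed.
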